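(* Let $x$ be a grid function with $x_s\neq 0$ at every node that satisfies the scheme (S) with $\check B\equiv 0$. Then at every node the discrete center-of-mass law $$(t\,x_t-x)_{\check t}+\Big(t\,(\hat x_s\check x_s)^{-1}-t\,\alpha^2 x_s\Big)_{\bar s}=0$$ holds (here $t$ is the time coordinate of the node, so $(t x_t-x)_{\check t}=\big(t x_t-x-(t-\tau)\check x_t+\check x\big)/\tau$).
   Context: Fix mesh steps $\tau>0$, $h>0$ and a constant $\alpha\in\mathbb R$. A grid function is a real-valued function $f=f(t,s)$ on the uniform orthogonal mesh $\{(n\tau,kh): n,k\in\mathbb Z\}$; at the node $(n\tau,kh)$ the symbol $t$ denotes the number $n\tau$. Shifts: $\hat f=f(t+\tau,s)$, $\check f=f(t-\tau,s)$, $f^+=f_+=f(t,s+h)$, $f^-=f_-=f(t,s-h)$; a shift applied to a composite expression shifts the whole expression (e.g. $\hat x_s$ is $x_s$ evaluated at $(t+\tau,s)$, $\check x_t$ is $x_t$ evaluated at $(t-\tau,s)$, $x_t^+$ is $x_t$ evaluated at $(t,s+h)$). Differences: $f_t=(\hat f-f)/\tau$, $f_{\check t}=(f-\check f)/\tau$, $f_s=(f_+-f)/h$, $f_{\bar s}=(f-f_-)/h$; iterated differences compose, e.g. $x_{t\check t}=(x_t)_{\check t}=(\hat x-2x+\check x)/\tau^2$ and $x_{s\bar s}=(x_s)_{\bar s}=(x_+-2x+x_-)/h^2$. Given a grid function $x$ with $x_s\neq0$ everywhere and a grid function $\check B$ (an approximation of the bottom-slope term), the scheme (S) is the requirement that at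 every node $$x_{t\check t}-\alpha^2x_{s\bar s}+\Big(\frac{1}{\hat x_s\check x_s}\Big)_{\bar s}-\check B=0 .$$ *)

(* Defs.v *)
From Stdlib Require Import Reals ZArith.
Open Scope R_scope.

(* A grid function on the mesh {(n tau, k h) : n,k in Z}: value at node (n,k). *)
Definition grid := Z -> Z -> R.

Definition hat   (f : grid) : grid := fun n k => f (n + 1)%Z k.
Definition check (f : grid) : grid := fun n k => f (n - 1)%Z k.
Definition splus (f : grid) : grid := fun n k => f n (k + 1)%Z.
Definition sminus (f : grid) : grid := fun n k => f n (k - 1)%Z.

Definition dt    (tau : R) (f : grid) : grid := fun n k => (hat f n k - f n k) / tau.
Definition dtb   (tau : R) (f : grid) : grid := fun n k => (f n k - check f n k) / tau.
Definition ds    (h : R) (f : grid) : grid := fun n k => (splus f n k - f n k) / h.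
Definition dsb   (h : R) (f : grid) : grid := fun n k => (f n k - sminus f n k) / h.

Definition tgrid (tau : R) : grid := fun n _ => IZR n * tau.

(* Scheme (S) with a given bottom term Bc (the grid function \check B):
   x_{t check t} - alpha^2 x_{s bar s} + (1/(hat x_s * check x_s))_{bar s} - Bc = 0 *)
Definition scheme_S (tau h alpha : R) (Bc x : grid) : Prop :=
  forall n k : Z,
    dtb tau (dt tau x) n k
    - alpha ^ 2 * dsb h (ds h x) n k
    + dsb h (fun n' k' => 1 / (hat (ds h x) n' k' * check (ds h x) n' k')) n k
    - Bc n k = 0.

(* Main.v *)
Require Import Defs.
From Stdlib Require Import Reals ZArith Lra.
Open Scope R_scope.

Theorem mainTheorem2 (tau h alpha : R) (Htau : 0 < tau) (Hh : 0 < h) (x : grid)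
  (Hxs : forall n k : Z, ds h x n k <> 0)
  (HS : scheme_S tau h alpha (fun _ _ => 0) x) :
  forall n k : Z,
    dtb tau (fun n' k' => tgrid tau n' k' * dt tau x n' k' - x n' k') n k
    + dsb h (fun n' k' =>
         tgrid tau n' k' * / (hat (ds h x) n' k' * check (ds h x) n' k')
         - tgrid tau n' k' * alpha ^ 2 * ds h x n' k') n k = 0.
Proof.
  intros n k. specialize (HS n k).
  unfold scheme_S, dtb, dsb, tgrid, check, sminus in *.
  set (A := / (hat (ds h x) n k * check (ds h x) n k)).
  set (B := / (hat (ds h x) n (k-1)%Z * check (ds h x) n (k-1)%Z)).
  unfold check in A, B.
  replace (1 / (hat (ds h x) n k * ds h x (n - 1)%Z k)) with A in HS by (unfold A, Rdiv; ring).
  replace (1 / (hat (ds h x) n (k-1)%Z * ds h x (n - 1)%Z (k-1)%Z)) with B in HS by (unfold B, Rdiv; ring).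
  fold A B.
  unfold dt, ds, hat, splus in *.
  rewrite minus_IZR.
  replace (n - 1 + 1)%Z with n in * by ring.
  replace (k - 1 + 1)%Z with k in * by ring.
  assert (Ht : tau <> 0) by lra. assert (Hh' : h <> 0) by lra.
  rewrite <- (Rmult_0_r (IZR n * tau)), <- HS. field. auto.
Qed.
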